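(* Let $N,K,N_0$ be positive integers with $N=KN_0$. Consider ordered $K$-tuples $(\boldsymbol\zeta_1,\dots,\boldsymbol\zeta_K)$, where each $\boldsymbol\zeta_k=(\boldsymbol\zeta_k[1]<\dots<\boldsymbol\zeta_k[N_0])$ is an increasing vector of elements of $\{1,\dots,N\}$, the sets $\{\boldsymbol\zeta_k[n]\}_n$ are pairwise disjoint, and which satisfy the translation constraint $$\boldsymbol\zeta_k[n]=\boldsymbol\zeta_{k'}[n]+\eta_{k,k'}\quad\text{for all } n\in\{1,\dots,N_0\},\ k\neq k',$$ for some nonzero integer constants $\eta_{k,k'}$. For each $k$ let $\mathrm{var}(\boldsymbol\zeta_k)=\frac1{N_0}\sum_n\boldsymbol\zeta_k[n]^2-\frac1{N_0^2}\big(\sum_n\boldsymbol\zeta_k[n]\big)^2$. Then, among all such tuples, $\min_k \mathrm{var}(\boldsymbol\zeta_k)$ is maximized when $\eta_{k,k'}=k-k'$ for all $k\ne k'$, i.e. by the interleaved distribution $\boldsymbol\zeta_k[n]=k+(n-1)K$.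
   Context: $\boldsymbol\zeta_k$ is the vector of subcarrier indices assigned to user $k$ in an OFDMA system with $N$ subcarriers labeled $1,\dots,N$ and $K$ users, each subcarrier used by at most one user, each user receiving $N_0$ subcarriers. The interleaved distribution assigns to user $k$ the subcarriers $k, k+K, k+2K,\dots,k+(N_0-1)K$. *)

(* Defs.v *)
From mathcomp Require Import all_boot all_order all_algebra.
Set Implicit Arguments. Unset Strict Implicit. Unset Printing Implicit Defensive.
Import Order.TTheory GRing.Theory Num.Theory.
Local Open Scope ring_scope.

(* An allocation is zeta : nat -> nat -> nat, where zeta k n is the paper's
   zeta_k[n], meaningful for users 1 <= k <= K and positions 1 <= n <= N0
   (1-based indices, as in the paper). Values outside that range are ignored. *)

Definition admissible (N K N0 : nat) (zeta : nat -> nat -> nat) : Prop :=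
  [/\
      (forall k n, (1 <= k <= K)%N -> (1 <= n <= N0)%N ->
         (1 <= zeta k n <= N)%N),
      (forall k n m, (1 <= k <= K)%N -> (1 <= n)%N -> (n < m)%N -> (m <= N0)%N ->
         (zeta k n < zeta k m)%N),
      (forall k k' n m, (1 <= k <= K)%N -> (1 <= k' <= K)%N -> k != k' ->
         (1 <= n <= N0)%N -> (1 <= m <= N0)%N -> zeta k n != zeta k' m) &
      (forall k k', (1 <= k <= K)%N -> (1 <= k' <= K)%N -> k != k' ->
         exists eta : int, eta != 0 /\
           forall n, (1 <= n <= N0)%N ->
             ((zeta k n)%:Z = (zeta k' n)%:Z + eta)%R)].

Definition var (N0 : nat) (zk : nat -> nat) : rat :=
  (N0%:R)^-1 * (\sum_(1 <= n < N0.+1) ((zk n)%:R) ^+ 2)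
  - (N0%:R ^+ 2)^-1 * (\sum_(1 <= n < N0.+1) (zk n)%:R) ^+ 2.

Definition minvar (K N0 : nat) (zeta : nat -> nat -> nat) : rat :=
  \big[Num.min/var N0 (zeta 1%N)]_(1 <= k < K.+1) var N0 (zeta k).

Definition interleaved (K : nat) : nat -> nat -> nat :=
  fun k n => (k + (n - 1) * K)%N.

(* Main.v *)
Require Import Defs.
From mathcomp Require Import all_boot all_order all_algebra zify ring lra.
Import Order.TTheory GRing.Theory Num.Theory.
Local Open Scope ring_scope.
Lemma head_ge (t : seq int) (x : int) : sorted >%R (x :: t) ->
  all (fun y => 0 < y) (x :: t) -> (size t)%:Z < x.
Proof.
elim: t x => [|y t IH] x /=; first by move=> _ /andP[].
case/andP=> hxy hp /andP[hx hall].
have := IH y hp hall. move: hxy => /= hxy. lia.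
Qed.

Lemma sq_bound (t : seq int) : sorted >%R t -> all (fun y => 0 < y) t ->
  ((size t)%:Z * ((size t)%:Z + 1) * (2 * (size t)%:Z + 1)) <= 6 * \sum_(y <- t) y ^+ 2.
Proof.
elim: t => [|x t IH] hs ha; first by rewrite big_nil.
have hx := head_ge _ _ hs ha.
move: hs ha => /= hs /andP[hx0 ha].
have := IH (path_sorted hs) ha.
rewrite big_cons /=.
move: (size t) hx => p hx.
move=> h3. nia.
Qed.

Definition gsum (s : seq int) : int := \sum_(a <- s) \sum_(b <- s) (a - b) ^+ 2.

Lemma gsum_bound (s : seq int) : sorted <%R s ->
  ((size s)%:Z ^+ 2 * ((size s)%:Z ^+ 2 - 1)) <= 6 * gsum s.
Proof.
elim: s => [|x t IH] hs; first by rewrite /gsum big_nil.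
have := hs; rewrite /= (path_sortedE lt_trans) => /andP[hall hst].
have IHt := IH hst.
set u := [seq b - x | b <- t].
have hu : sorted >%R (rev u).
  rewrite rev_sorted /u sorted_map.
  apply: sub_sorted hst => a b /=; by rewrite ltrBlDr subrK.
have hua : all (fun y => 0 < y) (rev u).
  rewrite all_rev all_map; apply: sub_all hall => b /=; by rewrite subr_gt0.
have hb := sq_bound _ hu hua.
rewrite big_rev size_rev size_map /u big_map in hb.
have -> : gsum (x :: t) = gsum t + 2 * \sum_(b <- t) (b - x) ^+ 2.
  rewrite /gsum big_cons !big_cons subrr expr0n /= add0r.
  rewrite [X in _ + X = _](eq_bigr (fun j => (j - x) ^+ 2 + \sum_(b <- t) (j - b) ^+ 2)); last by move=> j _; rewrite big_cons.
  rewrite big_split /= [X in X + _ = _](eq_bigr (fun j => (j - x) ^+ 2)); last by move=> j _; rewrite -sqrrN opprB.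
  ring.
move: hb IHt; rewrite /=. move: (\sum_(b <- t) (b - x) ^+ 2) (gsum t) (size t) => S g p.
move=> h1 h2. nia.
Qed.

Set Implicit Arguments. Unset Strict Implicit.

Definition dd (zeta : nat -> nat -> nat) (k : nat) : int :=
  (zeta k 1%N)%:Z - (zeta 1%N 1%N)%:Z.

Lemma transl N K N0 zeta : (0 < K)%N -> admissible N K N0 zeta ->
  forall k n, (1 <= k <= K)%N -> (1 <= n <= N0)%N ->
  (zeta k n)%:Z = (zeta 1%N n)%:Z + dd zeta k.
Proof.
move=> hK [_ _ _ htr] k n hk hn.
have h1 : (1 <= 1 <= K)%N by rewrite leqnn hK.
case: (eqVneq k 1%N) => [->|hk1]; first by rewrite /dd subrr addr0.
have [eta [_ heta]] := htr k 1%N hk h1 hk1.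
have hn1 : (1 <= 1 <= N0)%N by rewrite leqnn; case/andP: hn => a b; exact: leq_trans a b.
rewrite heta // /dd (heta 1%N hn1); congr (_ + _); ring.
Qed.

Lemma dd_inj N K N0 zeta : admissible N K N0 zeta -> (0 < N0)%N ->
  forall k k', (1 <= k <= K)%N -> (1 <= k' <= K)%N -> dd zeta k = dd zeta k' -> k = k'.
Proof.
move=> [_ _ hd _] hN0 k k' hk hk' he.
apply/eqP; apply: contraT => hne.
have hn1 : (1 <= 1 <= N0)%N by rewrite leqnn hN0.
have := hd k k' 1%N 1%N hk hk' hne hn1 hn1.
move: he; rewrite /dd => /addIr /eqP; rewrite eqz_nat => /eqP ->; by rewrite eqxx.
Qed.

Lemma partition_sum N K N0 zeta (F : nat -> rat) : N = (K * N0)%N -> admissible N K N0 zeta ->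
  \sum_(1 <= k < K.+1) \sum_(1 <= n < N0.+1) F (zeta k n) = \sum_(1 <= x < N.+1) F x.
Proof.
move=> hN [hr hinc hd _].
set L := [seq zeta k n | k <- index_iota 1 K.+1, n <- index_iota 1 N0.+1].
have -> : \sum_(1 <= k < K.+1) \sum_(1 <= n < N0.+1) F (zeta k n) = \sum_(x <- L) F x.
  by rewrite big_allpairs_dep.
apply: perm_big.
have hu : uniq L.
  apply: allpairs_uniq; rewrite ?iota_uniq //.
  move=> [k n] [k' m] /allpairsP [[a b] /= [ha hb [-> ->]]] /allpairsP [[a' b'] /= [ha' hb' [-> ->]]] /= he.
  move: ha hb ha' hb'; rewrite !mem_index_iota => ha hb ha' hb'.
  have hk : (1 <= a <= K)%N by lia.
  have hk' : (1 <= a' <= K)%N by lia.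
  case: (eqVneq a a') => [ea|hne]; last by have := hd a a' b b' hk hk' hne; rewrite he eqxx; lia.
  subst a'; congr (_, _).
  case: (ltngtP b b') => // hbb.
  - by have := hinc a b b' hk ltac:(lia) hbb ltac:(lia); rewrite he ltnn.
  - by have := hinc a b' b hk ltac:(lia) hbb ltac:(lia); rewrite he ltnn.
have hsub : {subset L <= index_iota 1 N.+1}.
  move=> x /allpairsP [[a b] /= [ha hb ->]].
  move: ha hb; rewrite !mem_index_iota => ha hb.
  have := hr a b; lia.
have hsz : (size (index_iota 1 N.+1) <= size L)%N.
  by rewrite size_allpairs /index_iota !size_iota !subSS !subn0 hN.
have [_ heq] := uniq_min_size hu hsub hsz.
apply: uniq_perm => //; exact: iota_uniq.
Qed.

Lemma sum_quad (b : nat -> rat) x y z m :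
  \sum_(1 <= k < m.+1) (x + y * b k + z * b k ^+ 2) =
  m%:R * x + y * \sum_(1 <= k < m.+1) b k + z * \sum_(1 <= k < m.+1) b k ^+ 2.
Proof. by rewrite !big_split /= sumr_const_nat subSS subn0 mulr_natl -!mulr_sumr. Qed.

Definition cc zeta k : rat := (dd zeta k)%:~R.
Definition Xof zeta K : rat :=
  K%:R * \sum_(1 <= k < K.+1) cc zeta k ^+ 2 - (\sum_(1 <= k < K.+1) cc zeta k) ^+ 2.
Definition S1 N : rat := \sum_(1 <= x < N.+1) x%:R.
Definition S2 N : rat := \sum_(1 <= x < N.+1) x%:R ^+ 2.

Lemma hz N K N0 zeta : (0 < K)%N -> admissible N K N0 zeta ->
  forall k n, (1 <= k <= K)%N -> (1 <= n <= N0)%N ->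
  (zeta k n)%:R = (zeta 1%N n)%:R + cc zeta k :> rat.
Proof.
move=> hK ha k n hk hn.
have := congr1 (fun z : int => z%:~R : rat) (transl hK ha hk hn).
by rewrite /= intrD.
Qed.

Lemma var_formula N K N0 zeta : (0 < K)%N -> (0 < N0)%N -> N = (K * N0)%N ->
  admissible N K N0 zeta ->
  var N0 (zeta 1%N) = (S2 N - S1 N ^+ 2 / (K%:R * N0%:R)) / (N0%:R * K%:R) - Xof zeta K / K%:R ^+ 2.
Proof.
move=> hK hN0 hN ha.
set a := fun n => (zeta 1%N n)%:R : rat.
set A := \sum_(1 <= n < N0.+1) a n.
set B := \sum_(1 <= n < N0.+1) a n ^+ 2.
have H1 : S1 N = K%:R * A + N0%:R * \sum_(1 <= k < K.+1) cc zeta k.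
  rewrite /S1 -(partition_sum (fun x => x%:R) hN ha).
  rewrite (eq_big_nat _ _ (F2 := fun k => \sum_(1 <= n < N0.+1) (a n + cc zeta k))); last first.
    by move=> k hk; apply: eq_big_nat => n hn; apply: (hz hK ha); lia.
  rewrite (eq_bigr (fun k => A + N0%:R * cc zeta k + 0 * cc zeta k ^+ 2)); last first.
    move=> k _.
    rewrite (eq_bigr (fun n => cc zeta k + 1 * a n + 0 * a n ^+ 2)); last by move=> n _; ring.
    rewrite sum_quad; rewrite /A; ring.
  by rewrite sum_quad; ring.
have H2 : S2 N = K%:R * B + 2 * A * \sum_(1 <= k < K.+1) cc zeta k + N0%:R * \sum_(1 <= k < K.+1) cc zeta k ^+ 2.
  rewrite /S2 -(partition_sum (fun x => x%:R ^+ 2) hN ha).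
  rewrite (eq_big_nat _ _ (F2 := fun k => \sum_(1 <= n < N0.+1) (cc zeta k ^+ 2 + (2 * cc zeta k) * a n + 1 * a n ^+ 2))); last first.
    by move=> k hk; apply: eq_big_nat => n hn; rewrite /= (hz hK ha) /a; [ring | lia | lia].
  rewrite (eq_bigr (fun k => B + (2 * A) * cc zeta k + N0%:R * cc zeta k ^+ 2)); last first.
    by move=> k _; rewrite sum_quad -/A -/B; ring.
  by rewrite sum_quad; ring.
have hK0 : K%:R != 0 :> rat by rewrite pnatr_eq0 -lt0n.
have hN00 : N0%:R != 0 :> rat by rewrite pnatr_eq0 -lt0n.
rewrite /var -/a -/A -/B H1 H2 /Xof.
field; by rewrite hK0 hN00.
Qed.

Lemma intrK (n : nat) : (n%:Z)%:~R = n%:R :> rat.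
Proof. by []. Qed.

Lemma Xof_ge N K N0 zeta : (0 < N0)%N -> admissible N K N0 zeta ->
  (K%:R ^+ 2 * (K%:R ^+ 2 - 1)) / 12 <= Xof zeta K.
Proof.
move=> hN0 ha.
set ds := [seq dd zeta k | k <- index_iota 1 K.+1].
have hu : uniq ds.
  rewrite map_inj_in_uniq ?iota_uniq // => k k'; rewrite !mem_index_iota => hk hk'.
  apply: (dd_inj ha hN0); lia.
have hs : sorted <%R (sort <=%R ds) by rewrite sort_lt_sorted.
have hb := gsum_bound _ hs.
rewrite size_sort size_map size_iota subSS subn0 in hb.
have hg : gsum (sort <=%R ds) = gsum ds.
  have hp : perm_eq (sort <=%R ds) ds by rewrite perm_sort.
  by rewrite /gsum (perm_big _ hp); apply: eq_bigr => a _; rewrite (perm_big _ hp).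
rewrite hg /gsum /ds big_map in hb.
have hcast : ((K%:Z) ^+ 2 * ((K%:Z) ^+ 2 - 1))%:~R <= (6 * \sum_(j <- index_iota 1 K.+1) \sum_(b <- ds) (dd zeta j - b) ^+ 2)%:~R :> rat.
  by rewrite ler_int.
rewrite !rmorphM !rmorphB !rmorphM rmorph1 rmorph_sum /= !intrK in hcast.
have e6 : ((1 + (1 + (1 + (1 + (1 + 1)))))%N)%:R = 6 :> rat by [].
rewrite e6 in hcast.

have eq1 : \sum_(1 <= i < K.+1) ((\sum_(b <- ds) (dd zeta i - b) ^+ 2)%:~R : rat)
   = \sum_(1 <= i < K.+1) (K%:R * cc zeta i ^+ 2 - 2 * (\sum_(1 <= k < K.+1) cc zeta k) * cc zeta i + \sum_(1 <= k < K.+1) cc zeta k ^+ 2).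
  apply: eq_bigr => i _.
  rewrite rmorph_sum /ds big_map /=.
  rewrite (eq_bigr (fun k => cc zeta i ^+ 2 + (- 2 * cc zeta i) * cc zeta k + 1 * cc zeta k ^+ 2)); last first.
    by move=> k _; rewrite rmorphXn rmorphB /= /cc; ring.
  rewrite sum_quad; ring.
rewrite eq1 in hcast.
rewrite (eq_bigr (fun i => \sum_(1 <= k < K.+1) cc zeta k ^+ 2 + (- 2 * (\sum_(1 <= k < K.+1) cc zeta k)) * cc zeta i + K%:R * cc zeta i ^+ 2)) in hcast; last by move=> i _; ring.
rewrite sum_quad /= in hcast.
rewrite /Xof; move: hcast.
move: (\sum_(1 <= k < K.+1) cc zeta k ^+ 2) (\sum_(1 <= k < K.+1) cc zeta k) => D2 D1 h.
rewrite ler_pdivrMr //; lra.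
Qed.

Lemma sum_km1 m : 2 * \sum_(1 <= k < m.+1) (k%:R - 1 : rat) = m%:R * (m%:R - 1).
Proof.
elim: m => [|m IH]; first by rewrite big_geq.
rewrite big_nat_recr //= mulrDr IH -addn1 natrD; ring.
Qed.

Lemma sum_km1_sq m : 6 * \sum_(1 <= k < m.+1) (k%:R - 1 : rat) ^+ 2 = m%:R * (m%:R - 1) * (2 * m%:R - 1).
Proof.
elim: m => [|m IH]; first by rewrite big_geq.
rewrite big_nat_recr //= mulrDr IH -addn1 natrD; ring.
Qed.

Lemma Xof_inter K : Xof (interleaved K) K = (K%:R ^+ 2 * (K%:R ^+ 2 - 1)) / 12.
Proof.
have hc : forall k, cc (interleaved K) k = k%:R - 1.
  by move=> k; rewrite /cc /dd /interleaved subnn mul0n !addn0 intrB.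
rewrite /Xof [X in _ * X - _](eq_bigr (fun k => (k%:R - 1 : rat) ^+ 2)); last by move=> k _; rewrite ?hc.
rewrite [X in _ - X ^+ 2](eq_bigr (fun k => (k%:R - 1 : rat))); last by move=> k _; rewrite ?hc.
have e1 := sum_km1 K. have e2 := sum_km1_sq K.
move: e1 e2; move: (\sum_(1 <= k < K.+1) (k%:R - 1 : rat) ^+ 2) (\sum_(1 <= k < K.+1) (k%:R - 1 : rat)) => D2 D1 e1 e2.
have -> : D1 = K%:R * (K%:R - 1) / 2 by rewrite -e1; field.
have -> : D2 = K%:R * (K%:R - 1) * (2 * K%:R - 1) / 6 by rewrite -e2; field.
by field.
Qed.

Lemma inter_adm N K N0 : (0 < K)%N -> N = (K * N0)%N -> admissible N K N0 (interleaved K).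
Proof.
move=> hK hN; rewrite /admissible /interleaved; split.
- move=> k n hk hn; subst N; nia.
- move=> k n m hk hn hnm hm; nia.
- move=> k k' n m hk hk' hne hn hm; apply/eqP => he.
  case: (ltngtP n m) => hnm.
  + have : ((n - 1) * K + K <= (m - 1) * K)%N.
      rewrite -mulSnr; apply: leq_mul => //; lia.
    lia.
  + have : ((m - 1) * K + K <= (n - 1) * K)%N.
      rewrite -mulSnr; apply: leq_mul => //; lia.
    lia.
  + subst m; move/eqP: hne; lia.
- move=> k k' hk hk' hne; exists (k%:Z - k'%:Z); split.
    by rewrite subr_eq0 eqz_nat.
  move=> n hn; rewrite !PoszD; ring.
Qed.

Lemma var_shift N0 (f g : nat -> nat) (c : rat) :
  (forall n, (1 <= n <= N0)%N -> (f n)%:R = (g n)%:R + c) -> (0 < N0)%N -> var N0 f = var N0 g.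
Proof.
move=> h hN0; rewrite /var.
rewrite [X in _ - _ * X ^+ 2](eq_big_nat _ _ (F2 := fun n => c + 1 * (g n)%:R + 0 * (g n)%:R ^+ 2)); last by move=> n hn; rewrite h //; ring.
rewrite [X in _ * X - _](eq_big_nat _ _ (F2 := fun n => c ^+ 2 + (2 * c) * (g n)%:R + 1 * (g n)%:R ^+ 2)); last by move=> n hn; rewrite h //; ring.
rewrite !sum_quad.
have hN00 : N0%:R != 0 :> rat by rewrite pnatr_eq0 -lt0n.
field; done.
Qed.

Lemma minvar_eq N K N0 zeta : (0 < K)%N -> (0 < N0)%N -> admissible N K N0 zeta ->
  minvar K N0 zeta = var N0 (zeta 1%N).
Proof.
move=> hK hN0 ha; rewrite /minvar big_seq.
apply: (big_ind (fun x => x = var N0 (zeta 1%N))) => //.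
  by move=> x y -> ->; rewrite minxx.
move=> k; rewrite mem_index_iota => hk.
apply: (var_shift (c := cc zeta k)) => // n hn; apply: (hz hK ha) => //; lia.
Qed.

Unset Implicit Arguments.

Theorem proposition5 (N K N0 : nat) (hK : (0 < K)%N) (hN0 : (0 < N0)%N)
  (hN : N = (K * N0)%N) :
  admissible N K N0 (interleaved K) /\
  (forall zeta : nat -> nat -> nat, admissible N K N0 zeta ->
     minvar K N0 zeta <= minvar K N0 (interleaved K)).
Proof.
have hI := inter_adm hK hN.
split; first exact: hI.
move=> zeta ha.
rewrite (minvar_eq hK hN0 ha) (minvar_eq hK hN0 hI) (var_formula hK hN0 hN ha) (var_formula hK hN0 hN hI).
rewrite lerD2l lerN2; apply: ler_wpM2r; first by rewrite invr_ge0 exprn_ge0 // ler0n.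
rewrite Xof_inter; exact: (Xof_ge hN0 ha).
Qed.
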